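(* Let $\mathcal{A}$ be a dual Banach algebra. If $\mathcal{A}$ is Johnson pseudo-Connes amenable, then $\mathcal{A}$ is pseudo-Connes amenable.
   Context: A dual Banach algebra is a Banach algebra $\mathcal{A}$ together with a closed $\mathcal{A}$-submodule $\mathcal{A}_*$ of $\mathcal{A}^*$ such that $\mathcal{A}=(\mathcal{A}_* )^*$. For a Banach $\mathcal{A}$-bimodule $E$, $\sigma wc(E)$ denotes the closed submodule of all $x\in E$ such that $a\mapsto a\cdot x$ and $a\mapsto x\cdot a$ are weak$^*$-weak continuous from $\mathcal{A}$ to $E$. $\mathcal{A}\hat{\otimes}\mathcal{A}$ is a bimodule via $a\cdot(b\otimes c)=ab\otimes c$, $(b\otimes c)\cdot a=b\otimes ca$; duals carry the dual actions. $\pi_{\mathcal{A}}:\mathcal{A}\hat{\otimes}\mathcal{A}\to\mathcal{A}$ is multiplication; $\pi_{\mathcal{A}}^{**}$ induces a bimodule map $\pi_{\sigma wc}:(\sigma wc((\mathcal{A}\hat{\otimes}\mathcal{A})^* ))^*\to\mathcal{A}$ (restriction of $\pi_{\mathcal{A}}^*$ to $\mathcal{A}_*$ lands in $\sigma wc((\mathcal{A}\hat{\otimes}\mathcal{A})^* )$, and $\pi_{\sigma wc}$ is its adjoint). Elements of $\mathcal{A}\hat{\otimes}\mathcal{A}$ are regarded in $(\sigma wc((\mathcal{A}\hat{\otimes}\mathcal{A})^* ))^*$ by restriction. $\mathcal{A}$ is pseudo-Connes amenable if there is a net $(M_\alpha)$ in $\mathcal{A}\hat{\otimes}\mathcal{A}$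 with $a\cdot M_\alpha-M_\alpha\cdot a\to0$ weak$^*$ in $(\sigma wc((\mathcal{A}\hat{\otimes}\mathcal{A})^* ))^*$ and $\pi_{\sigma wc}(M_\alpha)a\to a$ weak$^*$ in $\mathcal{A}$ for all $a\in\mathcal{A}$. With $i_{\mathcal{A}_*}:\mathcal{A}_*\hookrightarrow\mathcal{A}^*$ the canonical embedding, $\mathcal{A}$ is Johnson pseudo-Connes amenable if there is a (not necessarily bounded) net $(m_\alpha)$ in $(\mathcal{A}\hat{\otimes}\mathcal{A})^{**}$ with $\langle T,a\cdot m_\alpha\rangle=\langle T,m_\alpha\cdot a\rangle$ for all $a\in\mathcal{A}$, $T\in\sigma wc((\mathcal{A}\hat{\otimes}\mathcal{A})^* )$, $\alpha$, and $i_{\mathcal{A}_*}^*\pi_{\mathcal{A}}^{**}(m_\alpha)a\to a$ for every $a\in\mathcal{A}$. *)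

(* Defs.v *)
From HB Require Import structures.
From mathcomp Require Import all_boot all_order all_algebra.
From mathcomp Require Import all_classical all_reals all_analysis.
From mathcomp Require Export complex.
Set Implicit Arguments. Unset Strict Implicit. Unset Printing Implicit Defensive.
Import Order.TTheory GRing.Theory Num.Theory.
Import numFieldNormedType.Exports.
Local Open Scope ring_scope.
Local Open Scope classical_set_scope.

Section DualBanach.
Variables (K : numFieldType) (A : normedModType K) (mul : A -> A -> A).
Variable Astar : (A -> K) -> Prop.   (* the predual A_* as a subset of A^* *)

Definition banach_algebra : Prop :=
  [/\ forall a b c, mul a (mul b c) = mul (mul a b) c,
      forall k x y z, mul (k *: x + y) z = k *: mul x z + mul y z,
      forall k x y z, mul z (k *: x + y) = k *: mul z x + mul z y
    & forall a b, `|mul a b| <= `|a| * `|b| ].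

Definition lin_fun (f : A -> K) := forall k x y, f (k *: x + y) = k * f x + f y.
Definition fun_bound (f : A -> K) (D : K) := 0 <= D /\ forall x, `|f x| <= D * `|x|.
Definition bdd_fun (f : A -> K) := lin_fun f /\ exists D, fun_bound f D.

(** Dual Banach algebra: A_* closed submodule of A^* with A = (A_* )^*
    via the canonical map a |-> (f |-> f a). *)
Definition dual_banach_algebra : Prop :=
  [/\ (forall f, Astar f -> bdd_fun f),
      Astar (fun _ => 0) /\ (forall k f g, Astar f -> Astar g ->
                                 Astar (fun x => k * f x + g x)),
      (forall a f, Astar f -> Astar (fun b => f (mul b a)) /\ Astar (fun b => f (mul a b))),
      (forall f, bdd_fun f ->
         (forall eps, 0 < eps -> exists g, Astar g /\ fun_bound (fun x => f x - g x) eps) ->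
         Astar f)
    & (* the canonical map A -> (A_* )^* is bijective *)
      (forall a, (forall f, Astar f -> f a = 0) -> a = 0) /\
      (forall phi : (A -> K) -> K,
         (forall k f g, Astar f -> Astar g -> phi (fun x => k * f x + g x) = k * phi f + phi g) ->
         (exists C, 0 <= C /\ forall f D, Astar f -> fun_bound f D -> `|phi f| <= C * D) ->
         exists a, forall f, Astar f -> phi f = f a) ].

Definition wstar_to (F : set_system A) (a : A) := forall f, Astar f -> f @ F --> f a.

(** (A ⊗^ A)^* = bounded bilinear forms on A x A (T b c = <T, b ⊗ c>). *)
Definition bil_form (T : A -> A -> K) :=
  (forall b, lin_fun (T b)) /\ (forall c, lin_fun (fun b => T b c)).
Definition bil_bound (T : A -> A -> K) (D : K) :=
  0 <= D /\ forall b c, `|T b c| <= D * `|b| * `|c|.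
Definition bdd_bil (T : A -> A -> K) := bil_form T /\ exists D, bil_bound T D.

(** (A ⊗^ A)^** = bounded linear functionals on (A ⊗^ A)^* (values off
    bounded bilinear forms are irrelevant). *)
Definition bdd_bidual (m : (A -> A -> K) -> K) :=
  (forall k T S, bdd_bil T -> bdd_bil S ->
      m (fun b c => k * T b c + S b c) = k * m T + m S) /\
  (exists C, 0 <= C /\ forall T D, bdd_bil T -> bil_bound T D -> `|m T| <= C * D).

(** Dual module actions on (A ⊗^ A)^* :
    <a.T, b⊗c> = <T, b⊗ca>,  <T.a, b⊗c> = <T, ab⊗c>. *)
Definition lactT (a : A) (T : A -> A -> K) : A -> A -> K := fun b c => T b (mul c a).
Definition ractT (T : A -> A -> K) (a : A) : A -> A -> K := fun b c => T (mul a b) c.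
(** Dual module actions on (A ⊗^ A)^** : <T, a.m> = <T.a, m>, <T, m.a> = <a.T, m>. *)
Definition lactB (a : A) (m : (A -> A -> K) -> K) := fun T => m (ractT T a).
Definition ractB (m : (A -> A -> K) -> K) (a : A) := fun T => m (lactT a T).

(** Weak convergence (sigma((A⊗^A)^*, (A⊗^A)^** )) of a filter on (A⊗^A)^*. *)
Definition weak_to (G : set_system (A -> A -> K)) (S : A -> A -> K) :=
  forall m, bdd_bidual m -> m @ G --> m S.

Definition wstar_weak_cont (g : A -> (A -> A -> K)) :=
  forall (a : A) (F : set_system A), Filter F -> wstar_to F a -> weak_to (g @ F) (g a).

Definition sigma_wc (T : A -> A -> K) :=
  [/\ bdd_bil T, wstar_weak_cont (fun a => lactT a T)
    & wstar_weak_cont (fun a => ractT T a)].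

Definition directed (I : Type) (le : I -> I -> Prop) :=
  [/\ inhabited I, (forall i, le i i), (forall i j k, le i j -> le j k -> le i k)
    & (forall i j, exists k, le i k /\ le j k)].

(** Elements of the projective tensor product A ⊗^ A, represented as
    sum_n u n ⊗ v n with sum_n ||u n|| ||v n|| < oo. *)
Definition ptens_rep (u v : nat -> A) :=
  exists B : K, forall N, \sum_(n < N) `|u n| * `|v n| <= B.
Definition tpair (T : A -> A -> K) (u v : nat -> A) : K :=
  lim (series (fun n => T (u n) (v n)) @ \oo).

(** pseudo-Connes amenability.  [w i] = pi_{sigma wc}(M_i) in A = (A_* )^*,
    i.e. the element with f(w i) = <pi^* f, M_i> for f in A_*. *)
Definition pseudo_connes_amenable : Prop :=
  exists (I : Type) (le : I -> I -> Prop), directed le /\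
  exists (u v : I -> nat -> A) (w : I -> A),
  [/\ (forall i, ptens_rep (u i) (v i)),
      (forall i f, Astar f -> f (w i) = tpair (fun b c => f (mul b c)) (u i) (v i)),
      (* a.M_i - M_i.a -> 0 weak* in (sigma wc((A⊗^A)^* ))^* *)
      (forall a T, sigma_wc T -> forall eps, 0 < eps -> exists i0, forall i, le i0 i ->
         `| tpair T (fun n => mul a (u i n)) (v i)
            - tpair T (u i) (fun n => mul (v i n) a) | < eps)
    &
      (forall a f, Astar f -> forall eps, 0 < eps -> exists i0, forall i, le i0 i ->
         `| f (mul (w i) a) - f a | < eps) ].

(** Johnson pseudo-Connes amenability.  [w i] = i_{A_*}^* pi^** (m_i) in
    (A_* )^* = A, i.e. the element with f(w i) = <pi^* f, m_i> for f in A_*. *)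
Definition johnson_pseudo_connes_amenable : Prop :=
  exists (I : Type) (le : I -> I -> Prop), directed le /\
  exists (m : I -> (A -> A -> K) -> K) (w : I -> A),
  [/\ (forall i, bdd_bidual (m i)),
      (forall i a T, sigma_wc T -> lactB a (m i) T = ractB (m i) a T),
      (forall i f, Astar f -> f (w i) = m i (fun b c => f (mul b c)))
    &
      (forall a eps, 0 < eps -> exists i0, forall i, le i0 i ->
         `| mul (w i) a - a | < eps) ].

End DualBanach.

(* Main.v *)
Require Import Defs.
From mathcomp Require Import all_boot all_order all_algebra.
From mathcomp Require Import all_classical all_reals all_analysis.
From mathcomp Require Import complex ring.
Import Order.TTheory GRing.Theory Num.Theory.
Import numFieldNormedType.Exports.
Local Open Scope ring_scope.
Set Implicit Arguments. Unset Strict Implicit.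

Section Helly.
Variables (K : numFieldType) (A : normedModType K).
Implicit Types (T S : A -> A -> K) (x : seq (A * A)).

Lemma lin0 (g : A -> K) : lin_fun g -> g 0 = 0.
Proof.
move=> H; have h := H 1 0 0; rewrite scale1r addr0 mul1r in h.
by apply: (addrI (g 0)); rewrite addr0 -h.
Qed.

Lemma linZ (g : A -> K) k y : lin_fun g -> g (k *: y) = k * g y.
Proof. by move=> H; have := H k y 0; rewrite addr0 lin0 // addr0. Qed.

Lemma linD (g : A -> K) y z : lin_fun g -> g (y + z) = g y + g z.
Proof. by move=> H; have := H 1 y z; rewrite scale1r mul1r. Qed.

Lemma linB (g : A -> K) y z : lin_fun g -> g (y - z) = g y - g z.
Proof. by move=> H; have := H (-1) z y; rewrite scaleN1r mulN1r addrC [_ + g y]addrC. Qed.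

Definition ev T x : K := \sum_(p <- x) T p.1 p.2.
Definition sc (k : K) x := map (fun p => (k *: p.1, p.2)) x.

Lemma ev_cat T x y : ev T (x ++ y) = ev T x + ev T y.
Proof. by rewrite /ev big_cat. Qed.

Lemma ev_sc T k x : bil_form T -> ev T (sc k x) = k * ev T x.
Proof.
move=> [_ H2]; rewrite /ev big_map mulr_sumr; apply: eq_bigr => p _ /=.
exact: (linZ k p.1 (H2 p.2)).
Qed.

Lemma ev_lc T S k x : ev (fun b d => k * T b d + S b d) x = k * ev T x + ev S x.
Proof. by rewrite /ev big_split /= mulr_sumr. Qed.

Lemma ev1 T b d : ev T [:: (b, d)] = T b d.
Proof. by rewrite /ev big_seq1. Qed.

Lemma bdd_zero : bdd_bil (fun _ _ : A => (0 : K)).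
Proof.
split; first by split=> ? ? ? ?; rewrite mulr0 addr0.
by exists 0; split => // b c; rewrite normr0 !mul0r.
Qed.

Lemma bdd_lc T S k : bdd_bil T -> bdd_bil S -> bdd_bil (fun b d => k * T b d + S b d).
Proof.
move=> [[T1 T2] [D1 [D1p HD1]]] [[S1 S2] [D2 [D2p HD2]]]; split.
  split=> [b|c] k' y z /=.
    by rewrite (T1 b) (S1 b); ring.
  by rewrite (T2 c) (S2 c); ring.
exists (`|k| * D1 + D2); split; first by rewrite addr_ge0 // mulr_ge0.
move=> b c; apply: (le_trans (ler_normD _ _)); rewrite normrM.
rewrite !mulrDl -!mulrA; apply: lerD.
  by apply: ler_wpM2l => //; rewrite mulrA; apply: HD1.
by rewrite mulrA; apply: HD2.
Qed.

Definition linm (m : (A -> A -> K) -> K) :=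
  forall k T S, bdd_bil T -> bdd_bil S ->
      m (fun b c => k * T b c + S b c) = k * m T + m S.

Lemma m0 m : linm m -> m (fun _ _ => 0) = 0.
Proof.
move=> Hm; pose z := (fun _ _ : A => (0:K)).
have h := Hm 1 z z bdd_zero bdd_zero.
have E : (fun b c => 1 * z b c + z b c) = z.
  by apply/funext => b; apply/funext => c; rewrite /z mulr0 addr0.
rewrite E mul1r in h; rewrite -/z.
by apply: (addrI (m z)); rewrite addr0 -h.
Qed.

Fixpoint combo (cs : seq K) (s : seq (A -> A -> K)) : A -> A -> K :=
  match cs, s with
  | c :: cs', T :: s' => fun b d => c * T b d + combo cs' s' b d
  | _, _ => fun _ _ => 0
  end.

Lemma combo_bdd cs s : (forall T, List.In T s -> bdd_bil T) -> bdd_bil (combo cs s).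
Proof.
elim: cs s => [|c cs IH] [|T s] Hs /=; try exact: bdd_zero.
apply: bdd_lc; first by apply: Hs; left.
by apply: IH => T' h; apply: Hs; right.
Qed.

Lemma combo_ev m cs s x : linm m -> (forall T, List.In T s -> bdd_bil T) ->
  (forall T, List.In T s -> ev T x = m T) -> ev (combo cs s) x = m (combo cs s).
Proof.
move=> Hm; elim: cs s => [|c cs IH] [|T s] Hs Hx /=;
  try by rewrite m0 // /ev big1.
rewrite ev_lc Hm; last 2 first.
- by apply: Hs; left.
- by apply: combo_bdd => T' h; apply: Hs; right.
rewrite Hx; last by left.
by rewrite IH // => T' h; [apply: Hs | apply: Hx]; right.
Qed.

Definition ker s x := forall T, List.In T s -> ev T x = 0.

Lemma kernel s : (forall T, List.In T s -> bdd_bil T) -> forall T0, bdd_bil T0 ->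
  (forall x, ker s x -> ev T0 x = 0) -> exists cs, forall b d, T0 b d = combo cs s b d.
Proof.
elim: s => [|T1 s IH] Hs T0 hT0 Hker.
  exists [::]; move=> b d /=; have := Hker [:: (b, d)] (fun T (h : List.In T [::]) => match h with end).
  by rewrite ev1.
have Hs' : forall T, List.In T s -> bdd_bil T by move=> T h; apply: Hs; right.
have hT1 : bdd_bil T1 by apply: Hs; left.
case: (pselect (exists x0, ker s x0 /\ ev T1 x0 != 0)).
  case=> x0 [k0 n0].
  pose al := ev T0 x0 / ev T1 x0.
  have Hk : forall x, ker s x -> ev (fun b d => (- al) * T1 b d + T0 b d) x = 0.
    move=> x kx; rewrite ev_lc.
    pose be := ev T1 x / ev T1 x0.
    have kk : ker (T1 :: s) (x ++ sc (- be) x0).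
      move=> T [<-|hT]; rewrite ev_cat ev_sc.
      - by rewrite /be mulNr divfK // subrr.
      - by case: hT1.
      - by rewrite kx // k0 // mulr0 addr0.
      - by case: (Hs' _ hT).
    have := Hker _ kk.
    rewrite ev_cat ev_sc; last by case: hT0.
    move=> h; have -> : ev T0 x = ev T0 x + - be * ev T0 x0 + be * ev T0 x0 by ring.
    by rewrite h /al /be; ring.
  have [cs Hcs] := IH Hs' _ (bdd_lc _ hT1 hT0) Hk.
  by exists (al :: cs); move=> b d /=; rewrite -Hcs; ring.
move=> nex.
have Hk : forall x, ker s x -> ev T0 x = 0.
  move=> x kx; apply: Hker => T [<-|hT]; last exact: kx.
  case: (eqVneq (ev T1 x) 0) => // ne; exfalso; apply: nex; exists x; split => //.
have [cs Hcs] := IH Hs' T0 hT0 Hk.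
by exists (0 :: cs); move=> b d /=; rewrite mul0r add0r.
Qed.

Lemma helly m s : linm m -> (forall T, List.In T s -> bdd_bil T) ->
  exists x, forall T, List.In T s -> ev T x = m T.
Proof.
move=> Hm; elim: s => [|T1 s IH] Hs; first by exists [::].
have Hs' : forall T, List.In T s -> bdd_bil T by move=> T h; apply: Hs; right.
have hT1 : bdd_bil T1 by apply: Hs; left.
have [x Hx] := IH Hs'.
case: (pselect (exists x0, ker s x0 /\ ev T1 x0 != 0)).
  case=> x0 [k0 n0].
  exists (x ++ sc ((m T1 - ev T1 x) / ev T1 x0) x0).
  move=> T [<-|hT]; rewrite ev_cat ev_sc.
  - by rewrite divfK // addrC subrK.
  - by case: hT1.
  - by rewrite Hx // (k0 T hT) mulr0 addr0.
  - by case: (Hs' _ hT).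
move=> nex.
have Hk : forall x, ker s x -> ev T1 x = 0.
  move=> y kx; case: (eqVneq (ev T1 y) 0) => // ne; exfalso; apply: nex; exists y; split => //.
have [cs Hcs] := kernel Hs' hT1 Hk.
exists x; move=> T [<-|hT]; last exact: Hx.
have -> : T1 = combo cs s by apply/funext => b; apply/funext => d; apply: Hcs.
exact: combo_ev.
Qed.

Lemma evE T x : ev T x = \sum_(n < size x) T (nth (0,0) x n).1 (nth (0,0) x n).2.
Proof. by rewrite /ev (big_nth (0,0)) big_mkord. Qed.

Lemma tpair_ev T x : T 0 0 = 0 ->
  tpair T (fun n => (nth (0,0) x n).1) (fun n => (nth (0,0) x n).2) = ev T x.
Proof.
move=> T00; rewrite evE /tpair; apply: lim_near_cst; first exact: norm_hausdorff.
near=> n; rewrite /series /=.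
have hn : (size x <= n)%N by near: n; exists (size x).
rewrite (big_cat_nat (n:=size x)) //= /= big_mkord.
rewrite [X in _ + X]big1_seq ?addr0 // => k /andP[_]; rewrite mem_index_iota => /andP[hk _].
by rewrite nth_default.
Unshelve. all: by end_near.
Qed.

End Helly.

Lemma sum_trunc (K : numDomainType) (a : nat -> K) M N :
  (forall n, 0 <= a n) -> (forall n, (M <= n)%N -> a n = 0) ->
  \sum_(n < N) a n <= \sum_(n < M) a n.
Proof.
move=> H0 H1; case: (leqP N M) => h.
  rewrite -!(big_mkord xpredT) [X in _ <= X](big_cat_nat (n:=N)) //= lerDl.
  by apply: sumr_ge0.
rewrite -!(big_mkord xpredT) [X in X <= _](big_cat_nat (n:=M)) ?(ltnW h) //=.
rewrite [X in _ + X]big1_seq ?addr0 // => n /andP[_]; rewrite mem_index_iota => /andP[hn _].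
exact: H1.
Qed.

Unset Implicit Arguments.
Local Open Scope complex_scope.

Theorem lemma2p4 (R : realType) (A : completeNormedModType R[i])
    (mul : A -> A -> A) (Astar : (A -> R[i]) -> Prop) :
  banach_algebra mul ->
  dual_banach_algebra mul Astar ->
  johnson_pseudo_connes_amenable mul Astar ->
  pseudo_connes_amenable mul Astar.
Proof.
move=> HB HD [I [le [[[i0] Hr Ht Hd] [m [w [Hm Hcomm Hw Hconv]]]]]].
have [Hbdd Hsub Hmod Hclosed Hsep] := HD.
have [Hassoc Hl Hr' Hnorm] := HB.
have mA0l : forall z, mul 0 z = 0.
  move=> z; have h := Hl 1 0 0 z; rewrite !scale1r addr0 in h.
  by apply: (addrI (mul 0 z)); rewrite addr0 -h.
have mA0r : forall z, mul z 0 = 0.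
  move=> z; have h := Hr' 1 0 0 z; rewrite !scale1r addr0 in h.
  by apply: (addrI (mul z 0)); rewrite addr0 -h.
have mulDl : forall x y z, mul (x + y) z = mul x z + mul y z.
  by move=> x y z; have := Hl 1 x y z; rewrite !scale1r.
pose J := (I * seq {T : A -> A -> R[i] | bdd_bil T})%type.
pose leJ := fun (j1 j2 : J) => le j1.1 j2.1 /\ forall T, List.In T j1.2 -> List.In T j2.2.
have Hlin : forall i, linm (m i) by move=> i; case: (Hm i).
have HX : forall j : J, exists x, forall T, List.In T (map (@proj1_sig _ _) j.2) -> ev T x = m j.1 T.
  move=> j; apply: helly (Hlin _) _ => T /List.in_map_iff [y [<- _]].
  exact: (proj2_sig y).
pose X j := proj1_sig (cid (HX j)).
have HXs : forall j T, List.In T (map (@proj1_sig _ _) j.2) -> ev T (X j) = m j.1 T.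
  by move=> j; exact: (proj2_sig (cid (HX j))).
have inJ : forall (j : J) T (hT : bdd_bil T), List.In (exist _ T hT) j.2 ->
    List.In T (map (@proj1_sig _ _) j.2).
  by move=> j T hT h; apply/List.in_map_iff; exists (exist _ T hT).
exists J, leJ; split.
  split.
  - exact: (inhabits (i0, [::])).
  - by move=> j; split.
  - move=> j1 j2 j3 [a1 b1] [a2 b2]; split; first exact: Ht a1 a2.
    by move=> T hT; apply: b2; apply: b1.
  - move=> j1 j2; have [k [h1 h2]] := Hd j1.1 j2.1.
    exists (k, j1.2 ++ j2.2); split; split => // T hT; apply: List.in_or_app; by [left|right].
exists (fun j n => (nth (0,0) (X j) n).1), (fun j n => (nth (0,0) (X j) n).2).
exists (fun j => \sum_(p <- X j) mul p.1 p.2).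
split.
- move=> j; exists (\sum_(n < size (X j)) `|(nth (0,0) (X j) n).1| * `|(nth (0,0) (X j) n).2|).
  move=> N; apply: (@sum_trunc _ (fun n => `|(nth (0,0) (X j) n).1| * `|(nth (0,0) (X j) n).2|) (size (X j))) => n; first by rewrite mulr_ge0.
  by move=> hn; rewrite nth_default //= normr0 mul0r.
- move=> j f hf; have [flin _] := Hbdd f hf.
  rewrite tpair_ev; last by rewrite mA0l lin0.
  rewrite /ev (big_morph f (fun y z => linD y z flin) (lin0 flin)).
  done.
- move=> a T hT eps heps.
  have [[[T1 T2] [D [D0 HD0]]] _ _] := hT.
  have hR : bdd_bil (ractT mul T a).
    split; first split.
    + by move=> b k y z; rewrite /ractT T1.
    + by move=> c k y z; rewrite /ractT Hr' T2.
    exists (D * `|a|); split; first by rewrite mulr_ge0.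
    move=> b c; rewrite /ractT; apply: (le_trans (HD0 _ _)).
    rewrite -!mulrA; apply: ler_wpM2l => //; rewrite mulrA; apply: ler_wpM2r => //.
  have hL : bdd_bil (lactT mul a T).
    split; first split.
    + by move=> b k y z; rewrite /lactT Hl T1.
    + by move=> c k y z; rewrite /lactT T2.
    exists (D * `|a|); split; first by rewrite mulr_ge0.
    move=> b c; rewrite /lactT; apply: (le_trans (HD0 _ _)).
    rewrite -!mulrA; apply: ler_wpM2l => //.
    apply: le_trans (ler_wpM2l (normr_ge0 b) (Hnorm c a)) _.
    rewrite le_eqVlt; apply/orP; left; apply/eqP; ring.
  exists (i0, [:: exist _ (ractT mul T a) hR; exist _ (lactT mul a T) hL]).
  move=> j [_ hj].
  have h0R : ractT mul T a 0 0 = 0 by rewrite /ractT mA0r (lin0 (T1 0)).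
  have h0L : lactT mul a T 0 0 = 0 by rewrite /lactT mA0l (lin0 (T1 0)).
  have E1 : tpair T (fun n => mul a (nth (0,0) (X j) n).1) (fun n => (nth (0,0) (X j) n).2)
      = ev (ractT mul T a) (X j) := @tpair_ev _ _ (ractT mul T a) (X j) h0R.
  have E2 : tpair T (fun n => (nth (0,0) (X j) n).1) (fun n => mul (nth (0,0) (X j) n).2 a)
      = ev (lactT mul a T) (X j) := @tpair_ev _ _ (lactT mul a T) (X j) h0L.
  have iR : List.In (ractT mul T a) (map (@proj1_sig _ _) j.2).
    by apply: (inJ j _ hR); apply: hj; left.
  have iL : List.In (lactT mul a T) (map (@proj1_sig _ _) j.2).
    by apply: (inJ j _ hL); apply: hj; right; left.
  rewrite E1 E2 (HXs j _ iR) (HXs j _ iL).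
  have := Hcomm j.1 a T hT; rewrite /lactB /ractB => ->.
  by rewrite subrr normr0.
- move=> a f hf eps heps.
  have [flin [Df [Df0 HDf]]] := Hbdd f hf.
  have hg : Astar (fun b => f (mul b a)) := (Hmod a f hf).1.
  pose Tfa := fun b c => f (mul (mul b c) a).
  have hTfa : bdd_bil Tfa.
    split; first split.
    + by move=> b k y z; rewrite /Tfa Hr' Hl; apply: flin.
    + by move=> c k y z; rewrite /Tfa Hl Hl; apply: flin.
    exists (Df * `|a|); split; first by rewrite mulr_ge0.
    move=> b c; rewrite /Tfa; apply: (le_trans (HDf _)).
    rewrite -!mulrA; apply: ler_wpM2l => //.
    apply: le_trans (Hnorm _ _) _.
    apply: le_trans (ler_wpM2r (normr_ge0 a) (Hnorm b c)) _.
    rewrite le_eqVlt; apply/orP; left; apply/eqP; ring.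
  have hpos : 0 < Df + 1 by apply: (lt_le_trans ltr01); rewrite lerDr.
  have hd : 0 < eps / (Df + 1) by rewrite divr_gt0.
  have [i1 Hi1] := Hconv a _ hd.
  exists (i1, [:: exist _ Tfa hTfa]); move=> j [hle hj].
  have iT : List.In Tfa (map (@proj1_sig _ _) j.2).
    by apply: (inJ j _ hTfa); apply: hj; left.
  have Hs1 : forall s : seq (A * A),
      mul (\sum_(p <- s) mul p.1 p.2) a = \sum_(p <- s) mul (mul p.1 p.2) a :=
    fun s => big_morph (fun y => mul y a) (fun y z => mulDl y z a) (mA0l a) s xpredT _.
  have Hs2 : forall s : seq (A * A),
      f (\sum_(p <- s) mul (mul p.1 p.2) a) = \sum_(p <- s) f (mul (mul p.1 p.2) a) :=
    fun s => big_morph f (fun y z => linD y z flin) (lin0 flin) s xpredT _.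
  have E : f (mul (\sum_(p <- X j) mul p.1 p.2) a) = f (mul (w j.1) a).
    transitivity (m j.1 Tfa); last by symmetry; exact: (Hw j.1 _ hg).
    by rewrite -(HXs j _ iT) /ev /Tfa Hs1 Hs2.
  rewrite E -(linB (mul (w j.1) a) a flin).
  apply: (le_lt_trans (HDf _)).
  have h1 := Hi1 j.1 hle.
  apply: (le_lt_trans (ler_wpM2l Df0 (ltW h1))).
  rewrite [X in _ < X](_ : eps = (Df + 1) * (eps / (Df + 1))); last first.
    by rewrite mulrC divfK // (gt_eqF hpos).
  by rewrite ltr_pM2r // ltrDl ltr01.
Qed.
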